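(* Let $\mathbb K$ be a field of characteristic $0$ and $N\ge2$. The image of the weight system $W^{\mathrm{St}}_{\mathfrak{so}_N}:\mathcal A(\downarrow\downarrow)_{\mathbb K}\to\mathrm{End}(\mathbb K^N)^{\otimes2}$ associated with $(\mathfrak{so}_N(\mathbb K),B_0,\mathrm{St})$ is a commutative subalgebra.
   Context: Jacobi diagrams on an oriented compact $1$-manifold $X$ span $\mathcal A(X)$ modulo AS, IHX, STU; $\mathcal A(X)_{\mathbb K}=\mathcal A(X)\otimes\mathbb K$; $\downarrow\downarrow$ is two downward oriented strands, and $\mathcal A(\downarrow\downarrow)$ is an algebra under stacking. For a metrized Lie algebra $(\mathfrak g,\langle\cdot,\cdot\rangle)$ over $\mathbb K$, the universal weight system $W_{\mathfrak g}:\mathcal A(\downarrow^{\otimes n})_{\mathbb K}\to U(\mathfrak g)^{\otimes n}$ is the algebra homomorphism obtained by putting on each edge the Casimir tensor $\Omega=\sum_av_a\otimes v^a$ (basis and dual basis w.r.t. the form), at each trivalent vertex $-\mathbf t$ where $\mathbf t\in\mathfrak g^{\otimes3}$ corresponds to $(x,y,z)\mapsto\langle[x,y],z\rangle$ (factors in cyclic order), contracting along edges and multiplying in $U(\mathfrak g)$ along each strand in its orientation order; for a representation $\rho:\mathfrak g\to\mathrm{End}(V)$, $W^\rho_{\mathfrak g}=U(\rho)^{\otimes n}\circ W_{\mathfrak g}$. $\mathfrak{so}_N(\mathbb K)$ is the Lie algebra of antisymmetric $N\times N$ matrices, $B_0(x,y)=\mathrm{tr}(xy)$ its trace form, and $\mathrm{St}$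 the standard representation on $\mathbb K^N$. *)

(* Defs.v *)
From HB Require Import structures.
From mathcomp Require Import all_boot all_order all_algebra.
From mathcomp Require Import all_fingroup mxtens.
Set Implicit Arguments. Unset Strict Implicit. Unset Printing Implicit Defensive.
Import GRing.Theory Num.Theory.
Local Open Scope ring_scope.

(* Jacobi diagrams on two downward oriented strands (generators of A(↓↓)).  *)
(* A diagram has n trivalent vertices, p univalent vertices on strand 1 and *)
(* q univalent vertices on strand 2 (listed in the orientation order of the *)
(* strand).  Half-edges:                                                    *)
(*   inl (i, k)       : k-th half-edge (k = 0,1,2, in the cyclic order of   *)
(*                      the vertex orientation) of trivalent vertex i,      *)
(*   inr (inl j)      : the half-edge at the j-th univalent vertex of       *)
(*                      strand 1,                                           *)
(*   inr (inr j)      : the half-edge at the j-th univalent vertex of       *)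
(*                      strand 2.                                           *)
(* Edges are given by a fixed-point free involution on half-edges.          *)

Definition half_edge (n p q : nat) : finType :=
  (('I_n * 'I_3) + ('I_p + 'I_q))%type.

Record jdiag := JDiag {
  jn : nat; jp : nat; jq : nat;
  jedge : {perm half_edge jn jp jq};
  jedge_ok : [forall h, (jedge (jedge h) == h) && (jedge h != h)]
}.

(* so_N(K): basis e_{ij} = E_ij - E_ji (i < j) of antisymmetric matrices;   *)
(* trace form B0(x,y) = tr(x y); the standard representation St is the      *)
(* inclusion so_N -> End(K^N) = 'M_N.                                        *)

Section SoN.
Variables (K : fieldType) (N : nat).

Definition so_idx : finType := {ij : 'I_N * 'I_N | (ij.1 < ij.2)%N}.

Definition so_dim : nat := #|so_idx|.

Definition so_basis (a : 'I_so_dim) : 'M[K]_N :=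
  let ij := val (enum_val a) in delta_mx ij.1 ij.2 - delta_mx ij.2 ij.1.

Definition lie_bracket (x y : 'M[K]_N) : 'M[K]_N := x *m y - y *m x.

Definition B0 (x y : 'M[K]_N) : K := \tr (x *m y).

(* Gram matrix of B0 in the basis, and its inverse: the Casimir tensor is  *)
(* Omega = sum_a v_a (x) v^a = sum_{a,b} Ginv a b v_a (x) v_b.             *)
Definition so_gram : 'M[K]_so_dim := \matrix_(a, b) B0 (so_basis a) (so_basis b).
Definition so_gram_inv : 'M[K]_so_dim := invmx so_gram.

(* Universal weight system composed with St (x) St, on a single diagram,   *)
(* with End(K^N) (x) End(K^N) realized as 'M_(N*N) via the Kronecker       *)
(* product (an injective algebra map).  One sums over labellings of the     *)
(* half-edges by basis indices; each edge contributes the Casimir           *)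
(* coefficient, each trivalent vertex contributes -t evaluated on its three *)
(* half-edge vectors in cyclic order, i.e. -B0([x,y],z), and the univalent  *)
(* vertices contribute the product in U(so_N), mapped by St, along each     *)
(* strand in orientation order.                                             *)
Definition W_St (D : jdiag) : 'M[K]_(N * N) :=
  let s := jedge D in
  \sum_(l : {ffun half_edge (jn D) (jp D) (jq D) -> 'I_so_dim})
    ((\prod_(h : half_edge (jn D) (jp D) (jq D) | (enum_rank h < enum_rank (s h))%N) so_gram_inv (l h) (l (s h)))
     * (\prod_(i < jn D)
          - B0 (lie_bracket (so_basis (l (inl (i, 0)))) (so_basis (l (inl (i, 1)))))
               (so_basis (l (inl (i, 2))))))
    *: ((\big[mulmx/1%:M]_(j < jp D) so_basis (l (inr (inl j))))
        *t (\big[mulmx/1%:M]_(j < jq D) so_basis (l (inr (inr j))))).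

(* The image of W^St_{so_N} on A(↓↓)_K: the K-span of the values on        *)
(* diagrams (W factors through the relations AS, IHX, STU).                *)
Definition in_W_image (M : 'M[K]_(N * N)) : Prop :=
  exists (s : seq (K * jdiag)), M = \sum_(x <- s) x.1 *: W_St x.2.

End SoN.

(* Main.v *)
Require Import Defs.
From HB Require Import structures.
From mathcomp Require Import all_boot all_order all_algebra.
From mathcomp Require Import all_fingroup mxtens.
From mathcomp Require Import ring.
Set Implicit Arguments. Unset Strict Implicit. Unset Printing Implicit Defensive.
Import GRing.Theory.
Local Open Scope ring_scope.
Section P1.
Variables (K : fieldType) (N : nat).
Hypothesis char0 : [pchar K] =i pred0.

Lemma two_neq0 : (2%:R : K) != 0.
Proof. by rewrite (proj1 (pcharf0P K) char0). Qed.

Lemma tr_delta (i k : 'I_N) : \tr (delta_mx i k : 'M[K]_N) = (i == k)%:R.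
Proof.
rewrite /mxtrace (bigD1 i) //= big1 ?addr0.
  by rewrite mxE eqxx /= eq_sym.
by move=> x nx; rewrite mxE; case: eqP => // ex; rewrite ex eqxx in nx.
Qed.

Lemma so_ij (a : 'I_(so_dim N)) : ((val (enum_val a)).1 < (val (enum_val a)).2)%N.
Proof. exact: (valP (enum_val a)). Qed.

Lemma B0_basis (a b : 'I_(so_dim N)) :
  B0 (so_basis K a) (so_basis K b) = - 2%:R * (a == b)%:R.
Proof.
have eab : (a == b) = ((val (enum_val a)).1 == (val (enum_val b)).1) && ((val (enum_val a)).2 == (val (enum_val b)).2).
  apply/eqP/andP => [->//|[/eqP e1 /eqP e2]].
  apply: enum_val_inj; apply: val_inj.
  by rewrite [val (enum_val a)]surjective_pairing [val (enum_val b)]surjective_pairing e1 e2.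
rewrite eab /B0 /so_basis.
set i := (val (enum_val a)).1; set j := (val (enum_val a)).2.
set k := (val (enum_val b)).1; set l := (val (enum_val b)).2.
have hij : (i < j)%N := so_ij a. have hkl : (k < l)%N := so_ij b.
rewrite mulmxBl !mulmxBr !mul_delta_mx_cond !raddfB /= !raddfMn /= !tr_delta.
have hjk : (j == k) && (i == l) = false.
  apply/andP => -[/eqP e1 /eqP e2]; rewrite e1 e2 in hij.
  by have := ltn_trans hij hkl; rewrite ltnn.
move: hjk; case: (i == k); case: (j == l); case: (j == k); case: (i == l) => //= _;
  rewrite ?mulr0n ?mulr1n ?mulr1 ?mulr0 ?addr0 ?add0r ?oppr0 //.
- by rewrite addr0 mulr2n.
all: by rewrite addr0.
Qed.

Definition cG : K := (- 2%:R)^-1.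

Lemma so_gram_invE (a b : 'I_(so_dim N)) : so_gram_inv K N a b = cG * (a == b)%:R.
Proof.
rewrite /so_gram_inv; have -> : so_gram K N = (- 2%:R)%:M.
  by apply/matrixP => x y; rewrite !mxE B0_basis mulr_natr.
by rewrite invmx_scalar mxE mulr_natr.
Qed.
End P1.
Lemma big_invol (T : finType) (s : T -> T) (hs : involutive s)
  (hf : forall h, s h != h) (R : Type) (idx : R) (op : Monoid.com_law idx) (F : T -> R) :
  \big[op/idx]_h F h =
  \big[op/idx]_(h | (enum_rank h < enum_rank (s h))%N) op (F h) (F (s h)).
Proof.
rewrite (bigID (fun h => (enum_rank h < enum_rank (s h))%N)) /= big_split /=.
congr (op _ _); rewrite (reindex_inj (inv_inj hs)) /=; apply: eq_bigl => j.
rewrite hs -leqNgt leq_eqVlt; case: eqP => //= e.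
by have := hf j; rewrite -(enum_rank_inj (ord_inj e)) eqxx.
Qed.
Section P2.
Variables (K : fieldType) (N : nat).
Hypothesis char0 : [pchar K] =i pred0.

Notation HE D := (half_edge (jn D) (jp D) (jq D)).

Lemma jedge_inv (D : jdiag) : involutive (jedge D).
Proof. by move=> h; have /forallP/(_ h)/andP[/eqP -> _] := jedge_ok D. Qed.
Lemma jedge_nofix (D : jdiag) h : jedge D h != h.
Proof. by have /forallP/(_ h)/andP[_ ->] := jedge_ok D. Qed.

Definition edgef (D : jdiag) (l : {ffun HE D -> 'I_(so_dim N)}) : K :=
  \prod_(h : HE D | (enum_rank h < enum_rank (jedge D h))%N)
     so_gram_inv K N (l h) (l (jedge D h)).

Definition npairs (D : jdiag) : nat :=
  #|[pred h : HE D | (enum_rank h < enum_rank (jedge D h))%N]|.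

Lemma npairs_double D : (npairs D).*2 = #|HE D|.
Proof.
transitivity (\sum_(h : HE D) 1)%N; last by rewrite sum1_card.
rewrite (big_invol (@jedge_inv D) (@jedge_nofix D) addn) /= -mul2n.
by rewrite sum_nat_const mulnC.
Qed.

Lemma edge_sign D (l : {ffun HE D -> 'I_(so_dim N)}) (f : 'I_(so_dim N) -> K) (hf : forall a, f a * f a = 1) :
  edgef l * \prod_h f (l h) = edgef l.
Proof.
rewrite (big_invol (@jedge_inv D) (@jedge_nofix D) *%R) /edgef -big_split /=.
apply: eq_bigr => h _; rewrite so_gram_invE //.
case: eqP => [->|_]; last by rewrite !mulr0 mul0r.
by rewrite hf mulr1.
Qed.

Lemma edge_normal D (l : {ffun HE D -> 'I_(so_dim N)}) : edgef l =
  cG K ^+ npairs D * \prod_h ((l h == l (jedge D h))%:R : K).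
Proof.
rewrite /edgef (eq_bigr (fun h => cG K * ((l h == l (jedge D h))%:R))); last first.
  by move=> h _; rewrite so_gram_invE.
rewrite big_split /= prodr_const; congr (_ * _).
rewrite [RHS](big_invol (@jedge_inv D) (@jedge_nofix D) *%R).
apply: eq_bigr => h _; rewrite jedge_inv [l h == _]eq_sym.
by case: (l (jedge D h) == l h); [exact: (esym (mulr1 1)) | exact: (esym (mulr0 0))].
Qed.
End P2.
Lemma bigmx_recr (K : fieldType) (N : nat) n (F : 'I_n.+1 -> 'M[K]_N) : \big[mulmx/1%:M]_(j < n.+1) F j =
  \big[mulmx/1%:M]_(j < n) F (widen_ord (leqnSn n) j) *m F ord_max.
Proof.
case: N F => [|M] F; first by apply/matrixP => -[].
exact: (@big_ord_recr 'M[K]_M.+1 1 *%R n F).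
Qed.

Lemma bigmx_recl (K : fieldType) (N : nat) n (F : 'I_n.+1 -> 'M[K]_N) : \big[mulmx/1%:M]_(j < n.+1) F j =
  F ord0 *m \big[mulmx/1%:M]_(j < n) F (lift ord0 j).
Proof.
case: N F => [|M] F; first by apply/matrixP => -[].
exact: (@big_ord_recl 'M[K]_M.+1 1 *%R n F).
Qed.

Lemma bigmx0 (K : fieldType) (N : nat) (F : 'I_0 -> 'M[K]_N) : \big[mulmx/1%:M]_(j < 0) F j = 1%:M.
Proof. by rewrite big_ord0. Qed.

Lemma bigmx_scale (K : fieldType) (N : nat) n (c : 'I_n -> K) (F : 'I_n -> 'M[K]_N) :
  \big[mulmx/1%:M]_(j < n) (c j *: F j) = (\prod_(j < n) c j) *: \big[mulmx/1%:M]_(j < n) F j.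
Proof.
elim: n c F => [|n IH] c F; first by rewrite !bigmx0 big_ord0 scale1r.
by rewrite !bigmx_recr IH big_ord_recr /= -scalemxAl -scalemxAr scalerA.
Qed.

Lemma bigmx_split (K : fieldType) (N : nat) n1 n2 (F : 'I_(n1 + n2) -> 'M[K]_N) :
  \big[mulmx/1%:M]_(j < n1 + n2) F j =
  \big[mulmx/1%:M]_(j < n1) F (lshift n2 j) *m \big[mulmx/1%:M]_(j < n2) F (rshift n1 j).
Proof.
elim: n1 F => [|n1 IH] F.
  rewrite bigmx0 mul1mx; apply: eq_bigr => j _; congr F; exact: val_inj.
rewrite !bigmx_recl IH -mulmxA; congr (_ *m _).
  by congr F; exact: val_inj.
by congr (_ *m _); apply: eq_bigr => j _; congr F; exact: val_inj.
Qed.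

Section P3.
Variables (K : fieldType) (N : nat).
Hypothesis char0 : [pchar K] =i pred0.
Variables (sig : {perm 'I_N}) (eps : 'I_N -> K).
Hypothesis heps : forall i, eps i * eps i = 1.

Definition Phi (M : 'M[K]_N) : 'M[K]_N := \matrix_(x, y) (eps x * eps y * M (sig x) (sig y)).

Lemma Phi_mul A B : Phi (A *m B) = Phi A *m Phi B.
Proof.
apply/matrixP => x y; rewrite !mxE big_distrr /=.
rewrite (reindex_inj (@perm_inj _ sig)) /=; apply: eq_bigr => z _.
rewrite !mxE; have := heps z.
move: (eps x) (eps y) (eps z) (A (sig x) (sig z)) (B (sig z) (sig y)) => a b c u v e.
by transitivity (a*b*(u*v)*(c*c)); [rewrite e mulr1 | ring].
Qed.

Lemma Phi1 : Phi 1%:M = 1%:M.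
Proof.
apply/matrixP => x y; rewrite !mxE (inj_eq perm_inj).
by case: eqP => [->|_]; rewrite ?heps ?mulr1 ?mulr0.
Qed.

Lemma PhiB A B : Phi (A - B) = Phi A - Phi B.
Proof. by apply/matrixP => x y; rewrite !mxE mulrBr. Qed.

Lemma PhiZ c A : Phi (c *: A) = c *: Phi A.
Proof. by apply/matrixP => x y; rewrite !mxE mulrCA. Qed.

Lemma tr_Phi A : \tr (Phi A) = \tr A.
Proof.
rewrite /mxtrace [RHS](reindex_inj (@perm_inj _ sig)) /=.
by apply: eq_bigr => x _; rewrite mxE heps mul1r.
Qed.

Lemma B0_Phi A B : B0 (Phi A) (Phi B) = B0 A B.
Proof. by rewrite /B0 -Phi_mul tr_Phi. Qed.

Lemma bracket_Phi A B : lie_bracket (Phi A) (Phi B) = Phi (lie_bracket A B).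
Proof. by rewrite /lie_bracket PhiB !Phi_mul. Qed.

Lemma Phi_big (n : nat) (F : 'I_n -> 'M[K]_N) :
  Phi (\big[mulmx/1%:M]_(j < n) F j) = \big[mulmx/1%:M]_(j < n) Phi (F j).
Proof.
elim: n F => [|n IH] F; first by rewrite !bigmx0 Phi1.
by rewrite !bigmx_recr Phi_mul IH.
Qed.

Lemma Phi_delta i j : Phi (delta_mx i j) =
  (eps ((sig^-1)%g i) * eps ((sig^-1)%g j)) *: delta_mx ((sig^-1)%g i) ((sig^-1)%g j).
Proof.
apply/matrixP => x y; rewrite !mxE.
have ex : (sig x == i) = (x == (sig^-1)%g i).
  by apply/eqP/eqP => [<-|->]; rewrite ?permK ?permKV.
have ey : (sig y == j) = (y == (sig^-1)%g j).
  by apply/eqP/eqP => [<-|->]; rewrite ?permK ?permKV.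
rewrite ex ey; case: (x =P _) => [->|_]; case: (y =P _) => [->|_];
  by rewrite ?andbF ?mulr0 ?mulr1.
Qed.

Definition pi1 (a : 'I_(so_dim N)) := (sig^-1)%g (val (enum_val a)).1.
Definition pi2 (a : 'I_(so_dim N)) := (sig^-1)%g (val (enum_val a)).2.
Definition prho a : 'I_N * 'I_N := if (pi1 a < pi2 a)%N then (pi1 a, pi2 a) else (pi2 a, pi1 a).
Definition rho a : 'I_(so_dim N) := enum_rank (insubd (enum_val a) (prho a) : so_idx N).
Definition sg a : K := eps (pi1 a) * eps (pi2 a) * (if (pi1 a < pi2 a)%N then 1 else -1).

Lemma prho_ok a : ((prho a).1 < (prho a).2)%N.
Proof.
have ne : pi1 a != pi2 a.
  rewrite /pi1 /pi2 (inj_eq (@perm_inj _ _)).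
  by apply/eqP => e; have := so_ij a; rewrite e ltnn.
rewrite /prho; case: (ltnP (pi1 a) (pi2 a)) => //= h; rewrite ltn_neqAle h andbT.
by apply: contra ne => /eqP e; apply/eqP; apply: val_inj.
Qed.

Lemma basis_rho a : so_basis K (rho a) =
  delta_mx (prho a).1 (prho a).2 - delta_mx (prho a).2 (prho a).1.
Proof. by rewrite /so_basis /rho enum_rankK insubdK //; exact: prho_ok. Qed.

Lemma Phi_basis a : Phi (so_basis K a) = sg a *: so_basis K (rho a).
Proof.
rewrite basis_rho {1}/so_basis PhiB !Phi_delta -/(pi1 a) -/(pi2 a) /sg /prho.
case: (ltnP (pi1 a) (pi2 a)) => _ /=; rewrite ?mulr1 ?scalerBr [eps (pi2 a) * _]mulrC //.
by rewrite mulrN1 !scaleNr opprK addrC.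
Qed.

Lemma sg2 a : sg a * sg a = 1.
Proof.
rewrite /sg; have h1 := heps (pi1 a); have h2 := heps (pi2 a).
case: ltnP => _.
  by transitivity ((eps (pi1 a) * eps (pi1 a)) * (eps (pi2 a) * eps (pi2 a))); [ring | rewrite h1 h2 mulr1].
by transitivity ((eps (pi1 a) * eps (pi1 a)) * (eps (pi2 a) * eps (pi2 a))); [ring | rewrite h1 h2 mulr1].
Qed.

Lemma sg_neq0 a : sg a != 0.
Proof.
by apply/eqP => h; have := sg2 a; rewrite h mul0r => /eqP; rewrite eq_sym oner_eq0.
Qed.

Lemma rho_inj : injective rho.
Proof.
move=> a b e; have sa := sg_neq0 a; have sb := sg_neq0 b.
have : B0 (so_basis K a) (so_basis K b) != 0.
  rewrite -B0_Phi !Phi_basis e /B0 -scalemxAl -scalemxAr !mxtraceZ.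
  rewrite -/(B0 (so_basis K (rho b)) (so_basis K (rho b))) B0_basis // eqxx mulr1.
  by rewrite mulf_neq0 // mulf_neq0 // oppr_eq0 (two_neq0 char0).
by rewrite (B0_basis K a b); case: (a =P b) => // _; rewrite /= mulr0 eqxx.
Qed.
End P3.
Section P4.
Variables (K : fieldType) (N : nat).

Notation HE D := (half_edge (jn D) (jp D) (jq D)).
Notation lab D := {ffun HE D -> 'I_(so_dim N)}.

Definition vertf (D : jdiag) (l : lab D) : K :=
  \prod_(i < jn D)
          - B0 (lie_bracket (so_basis K (l (inl (i, 0)))) (so_basis K (l (inl (i, 1)))))
               (so_basis K (l (inl (i, 2)))).

Definition str1 (D : jdiag) (l : lab D) : 'M[K]_N :=
  \big[mulmx/1%:M]_(j < jp D) so_basis K (l (inr (inl j))).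
Definition str2 (D : jdiag) (l : lab D) : 'M[K]_N :=
  \big[mulmx/1%:M]_(j < jq D) so_basis K (l (inr (inr j))).

Lemma W_StE D : W_St K N D = \sum_(l : lab D) (edgef K l * vertf l) *: (str1 l *t str2 l).
Proof. by []. Qed.
End P4.
Section P5.
Variables (K : fieldType) (N : nat).
Hypothesis char0 : [pchar K] =i pred0.
Variables (sig : {perm 'I_N}) (eps : 'I_N -> K).
Hypothesis heps : forall i, eps i * eps i = 1.
Notation HE D := (half_edge (jn D) (jp D) (jq D)).
Notation lab D := {ffun HE D -> 'I_(so_dim N)}.

Definition Psi (M : 'M[K]_(N * N)) : 'M[K]_(N * N) :=
  \matrix_(k, k')
    (eps (mxtens_unindex k).1 * eps (mxtens_unindex k).2 *
     eps (mxtens_unindex k').1 * eps (mxtens_unindex k').2 *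
     M (mxtens_index (sig (mxtens_unindex k).1, sig (mxtens_unindex k).2))
       (mxtens_index (sig (mxtens_unindex k').1, sig (mxtens_unindex k').2))).

Lemma Psi_tens (A B : 'M[K]_N) : Psi (A *t B) = Phi sig eps A *t Phi sig eps B.
Proof.
apply/matrixP => k k'; rewrite !mxE !mxtens_indexK /=.
by rewrite /=; ring.
Qed.

Lemma Psi_sum (I : finType) (F : I -> 'M[K]_(N * N)) :
  Psi (\sum_i F i) = \sum_i Psi (F i).
Proof.
apply/matrixP => k k'; rewrite !mxE summxE big_distrr /=.
by rewrite summxE; apply: eq_bigr => i _; rewrite mxE.
Qed.

Lemma PsiZ c M : Psi (c *: M) = c *: Psi M.
Proof. by apply/matrixP => k k'; rewrite !mxE mulrCA. Qed.

Lemma tensZ (c d : K) (A B : 'M[K]_N) : (c *: A) *t (d *: B) = (c * d) *: (A *t B).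
Proof. by apply/matrixP => k k'; rewrite !mxE; ring. Qed.

Lemma bracketZ (c d : K) (A B : 'M[K]_N) :
  lie_bracket (c *: A) (d *: B) = (c * d) *: lie_bracket A B.
Proof.
by rewrite /lie_bracket -!scalemxAl -!scalemxAr !scalerA scalerBr [d * c]mulrC.
Qed.

Lemma B0Z (c d : K) (A B : 'M[K]_N) : B0 (c *: A) (d *: B) = c * d * B0 A B.
Proof. by rewrite /B0 -scalemxAl -scalemxAr !mxtraceZ mulrA. Qed.
End P5.
Section P6.
Variables (K : fieldType) (N : nat).
Hypothesis char0 : [pchar K] =i pred0.
Variables (sig : {perm 'I_N}) (eps : 'I_N -> K).
Hypothesis heps : forall i, eps i * eps i = 1.
Notation HE D := (half_edge (jn D) (jp D) (jq D)).
Notation lab D := {ffun HE D -> 'I_(so_dim N)}.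

Definition lr (D : jdiag) (l : lab D) : lab D := [ffun h => rho sig (l h)].

Lemma lr_inj D : injective (@lr D).
Proof.
move=> l1 l2 e; apply/ffunP => h.
have := congr1 (fun l : lab D => l h) e; rewrite /lr !ffunE.
exact: (rho_inj char0 heps).
Qed.

Lemma prod3 (f : 'I_3 -> K) : \prod_(k < 3) f k = f 0 * f 1 * f 2.
Proof.
rewrite !big_ord_recl big_ord0 mulr1 mulrA.
by congr (f _ * f _ * f _); apply: val_inj.
Qed.

Lemma vert_rho D (l : lab D) :
  vertf K l = (\prod_(h : 'I_(jn D) * 'I_3) sg sig eps (l (inl h))) * vertf K (lr l).
Proof.
have -> : \prod_(h : 'I_(jn D) * 'I_3) sg sig eps (l (inl h)) =
    \prod_(i < jn D) \prod_(k < 3) sg sig eps (l (inl (i, k))).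
  by rewrite pair_bigA; apply: eq_bigr => -[i k].
rewrite /vertf -big_split /=; apply: eq_bigr => i _.
rewrite prod3 /lr !ffunE -(B0_Phi sig heps) -(bracket_Phi sig heps) !Phi_basis.
by rewrite bracketZ B0Z mulrN.
Qed.

Lemma str1_Phi D (l : lab D) :
  Phi sig eps (str1 K l) = (\prod_(j < jp D) sg sig eps (l (inr (inl j)))) *: str1 K (lr l).
Proof.
rewrite /str1 (Phi_big sig heps) -bigmx_scale; apply: eq_bigr => j _.
by rewrite Phi_basis /lr ffunE.
Qed.

Lemma str2_Phi D (l : lab D) :
  Phi sig eps (str2 K l) = (\prod_(j < jq D) sg sig eps (l (inr (inr j)))) *: str2 K (lr l).
Proof.
rewrite /str2 (Phi_big sig heps) -bigmx_scale; apply: eq_bigr => j _.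
by rewrite Phi_basis /lr ffunE.
Qed.

Lemma edge_rho D (l : lab D) : edgef K (lr l) = edgef K l.
Proof.
rewrite /edgef; apply: eq_bigr => h _.
by rewrite !so_gram_invE /lr !ffunE (inj_eq (rho_inj char0 heps)).
Qed.

Lemma W_inv D : Psi sig eps (W_St K N D) = W_St K N D.
Proof.
rewrite !W_StE Psi_sum.
rewrite [RHS](reindex_inj (@lr_inj D)) /=; apply: eq_bigr => l _.
rewrite PsiZ Psi_tens str1_Phi str2_Phi tensZ scalerA; congr (_ *: _).
rewrite vert_rho edge_rho.
have := edge_sign l (sg2 sig heps).
rewrite big_sumType big_sumType /=.
move: (edgef K l) => E H; rewrite -[in RHS]H; ring.
Qed.
End P6.
Definition cnt4 (T : eqType) (k x1 x2 x3 x4 : T) : nat :=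
  ((x1 == k) + (x2 == k) + (x3 == k) + (x4 == k))%N.

Ltac fin4 := rewrite ?eqxx; repeat (match goal with |- context [?a == ?b] => case: (a == b) end); done.

Lemma pick4 (T : eqType) (x1 x2 x3 x4 : T) :
  [|| (x1==x3)&&(x2==x4), (x1==x4)&&(x2==x3), (x1==x2)&&(x3==x4),
      odd (cnt4 x1 x1 x2 x3 x4), odd (cnt4 x2 x1 x2 x3 x4),
      odd (cnt4 x3 x1 x2 x3 x4) | odd (cnt4 x4 x1 x2 x3 x4)].
Proof.
rewrite /cnt4.
have [<-|n12] := eqVneq x1 x2.
  have [<-|n34] := eqVneq x3 x4; first fin4.
  have n43 : x4 != x3 by rewrite eq_sym.
  rewrite ?(negbTE n34) ?(negbTE n43); fin4.
have n21 : x2 != x1 by rewrite eq_sym.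
have [<-|n13] := eqVneq x1 x3.
  have [<-|n24] := eqVneq x2 x4; first fin4.
  have n42 : x4 != x2 by rewrite eq_sym.
  rewrite ?(negbTE n12) ?(negbTE n21) ?(negbTE n24) ?(negbTE n42); fin4.
have n31 : x3 != x1 by rewrite eq_sym.
have [<-|n14] := eqVneq x1 x4.
  have [<-|n23] := eqVneq x2 x3; first fin4.
  have n32 : x3 != x2 by rewrite eq_sym.
  rewrite ?(negbTE n12) ?(negbTE n21) ?(negbTE n23) ?(negbTE n32); fin4.
have n41 : x4 != x1 by rewrite eq_sym.
rewrite ?(negbTE n12) ?(negbTE n21) ?(negbTE n13) ?(negbTE n31)
  ?(negbTE n14) ?(negbTE n41); fin4.
Qed.
Section P7.
Variables (K : fieldType) (N : nat).
Hypothesis char0 : [pchar K] =i pred0.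

Definition ment (M : 'M[K]_(N * N)) (i1 i2 j1 j2 : 'I_N) :=
  M (mxtens_index (i1, i2)) (mxtens_index (j1, j2)).

Lemma inv_entry M sig eps i1 i2 j1 j2 : Psi sig eps M = M ->
  ment M i1 i2 j1 j2 =
  eps i1 * eps i2 * eps j1 * eps j2 * ment M (sig i1) (sig i2) (sig j1) (sig j2).
Proof. by move=> h; rewrite -{1}h /ment mxE !mxtens_indexK. Qed.

Definition fl (k x : 'I_N) : K := (-1) ^+ (x == k).

Lemma fl2 k x : fl k x * fl k x = 1.
Proof. by rewrite /fl -signr_addb addbb. Qed.

Definition cnt (k x1 x2 x3 x4 : 'I_N) : nat := (x1 == k) + (x2 == k) + (x3 == k) + (x4 == k).

Lemma zero_odd M k i1 i2 j1 j2 :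
  (forall sig eps, (forall i, eps i * eps i = 1) -> Psi sig eps M = M) ->
  odd (cnt k i1 i2 j1 j2) -> ment M i1 i2 j1 j2 = 0.
Proof.
move=> hM ho; have := @inv_entry M 1%g (fl k) i1 i2 j1 j2 (hM 1%g (fl k) (fl2 k)).
rewrite !perm1 /fl -!exprD -signr_odd.
have -> : odd ((i1 == k) + (i2 == k) + (j1 == k) + (j2 == k)) by exact: ho.
rewrite expr1 mulN1r => /eqP; rewrite -subr_eq0 opprK -mulr2n -mulr_natl.
by rewrite mulf_eq0 (negbTE (two_neq0 char0)) /= => /eqP.
Qed.
End P7.
Section P9.
Variables (K : fieldType) (N : nat).
Hypothesis char0 : [pchar K] =i pred0.

Lemma sym_entry (M : 'M[K]_(N * N))
  (hM : forall sig eps, (forall i, eps i * eps i = 1) -> Psi sig eps M = M)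
  i1 i2 j1 j2 : ment M i1 i2 j1 j2 = ment M j1 j2 i1 i2.
Proof.
have Z k : odd (cnt4 k i1 i2 j1 j2) -> ment M i1 i2 j1 j2 = 0 /\ ment M j1 j2 i1 i2 = 0.
  move=> ho; split; apply: (@zero_odd K N char0 M k) => //.
  have -> : cnt k j1 j2 i1 i2 = cnt4 k i1 i2 j1 j2 by rewrite /cnt /cnt4; ring.
  exact: ho.
have h1 : forall i : 'I_N, ((fun _ => 1) i : K) * (fun _ => 1) i = 1 by move=> i; rewrite mulr1.
have T a b c d e f g h (s : {perm 'I_N}) : s a = e -> s b = f -> s c = g -> s d = h ->
    ment M a b c d = ment M e f g h.
  by move=> <- <- <- <-; rewrite (@inv_entry K N M s (fun _ => 1) a b c d (hM _ _ h1)) !mul1r.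
case/or4P: (pick4 i1 i2 j1 j2) => [/andP[/eqP <- /eqP <-] //|/andP[/eqP <- /eqP <-]|/andP[/eqP <- /eqP <-]|].
- by apply: (T _ _ _ _ _ _ _ _ (tperm i1 i2)); rewrite ?tpermL ?tpermR.
- by apply: (T _ _ _ _ _ _ _ _ (tperm i1 j1)); rewrite ?tpermL ?tpermR.
case/or4P => [/Z[-> ->]|/Z[-> ->]|/Z[-> ->]|/Z[-> ->]] //.
Qed.
End P9.
Section P10.
Variables (K : fieldType) (N : nat).
Hypothesis char0 : [pchar K] =i pred0.

Lemma W_sym D : (W_St K N D)^T = W_St K N D.
Proof.
apply/matrixP => k k'; rewrite mxE.
case: (mxtens_indexP k) => i1 i2; case: (mxtens_indexP k') => j1 j2.
have := @sym_entry K N char0 (W_St K N D) _ j1 j2 i1 i2; apply.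
by move=> sig eps heps; apply: W_inv.
Qed.

Lemma image_sym (M : 'M[K]_(N * N)) : in_W_image M -> M^T = M.
Proof.
case=> s ->; elim: s => [|x s IH]; first by rewrite big_nil trmx0.
by rewrite big_cons linearD /= linearZ /= W_sym IH.
Qed.

Lemma tens11 : (1%:M : 'M[K]_N) *t (1%:M : 'M[K]_N) = 1%:M.
Proof.
apply/matrixP => k k'.
case: (mxtens_indexP k) => i1 i2; case: (mxtens_indexP k') => j1 j2.
rewrite tensmxE !mxE (inj_eq (can_inj (@mxtens_indexK N N))) xpair_eqE.
by case: (i1 == j1); case: (i2 == j2); rewrite ?mulr1 ?mulr0.
Qed.
End P10.

Definition D0_perm : {perm half_edge 0 0 0} := 1%g.

Lemma D0_ok : [forall h, (D0_perm (D0_perm h) == h) && (D0_perm h != h)].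
Proof. by apply/forallP => -[[[]]|[[]|[]]]. Qed.

Definition D0 : jdiag := JDiag D0_ok.

Lemma W_D0 (K : fieldType) (N : nat) : W_St K N D0 = 1%:M.
Proof.
rewrite W_StE.
have l0 : {ffun half_edge 0 0 0 -> 'I_(so_dim N)}.
  by apply: finfun => -[[[]]|[[]|[]]].
rewrite (big_pred1 l0); last first.
  by move=> l /=; symmetry; apply/eqP/ffunP => -[[[]]|[[]|[]]].
rewrite /edgef /vertf /str1 /str2 !bigmx0 big_ord0 tens11.
by rewrite big1 ?mul1r ?scale1r // => -[[[]]|[[]|[]]].
Qed.
Section Stack.
Variables D1 D2 : jdiag.
Notation HE D := (half_edge (jn D) (jp D) (jq D)).
Notation T1 := (HE D1).
Notation T2 := (HE D2).
Notation TS := (half_edge (jn D1 + jn D2) (jp D1 + jp D2) (jq D1 + jq D2)).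

Definition sinj (x : T1 + T2) : TS :=
  match x with
  | inl (inl (i, k)) => inl (lshift _ i, k)
  | inl (inr (inl j)) => inr (inl (lshift _ j))
  | inl (inr (inr j)) => inr (inr (lshift _ j))
  | inr (inl (i, k)) => inl (rshift _ i, k)
  | inr (inr (inl j)) => inr (inl (rshift _ j))
  | inr (inr (inr j)) => inr (inr (rshift _ j))
  end.

Definition sunj (h : TS) : T1 + T2 :=
  match h with
  | inl (i, k) => match split i with inl i1 => inl (inl (i1, k)) | inr i2 => inr (inl (i2, k)) end
  | inr (inl j) => match split j with inl j1 => inl (inr (inl j1)) | inr j2 => inr (inr (inl j2)) end
  | inr (inr j) => match split j with inl j1 => inl (inr (inr j1)) | inr j2 => inr (inr (inr j2)) end
  end.

Lemma sinjK : cancel sinj sunj.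
Proof.
have L n m (i : 'I_n) : split (lshift m i) = inl i by rewrite -[lshift m i]/(unsplit (inl i)) unsplitK.
have R n m (i : 'I_m) : split (rshift n i) = inr i by rewrite -[rshift n i]/(unsplit (inr i)) unsplitK.
by case=> [[[i k]|[j|j]]|[[i k]|[j|j]]] /=; rewrite ?L ?R.
Qed.

Lemma sunjK : cancel sunj sinj.
Proof.
case=> [[i k]|[j|j]] /=;
  [rewrite -[i in RHS]splitK | rewrite -[j in RHS]splitK | rewrite -[j in RHS]splitK];
  by case: (split _).
Qed.

Definition smap (x : T1 + T2) : T1 + T2 :=
  match x with inl h1 => inl (jedge D1 h1) | inr h2 => inr (jedge D2 h2) end.

Definition sfun (h : TS) : TS := sinj (smap (sunj h)).

Lemma sfun_inv : involutive sfun.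
Proof.
move=> h; rewrite /sfun sinjK.
have -> : smap (smap (sunj h)) = sunj h.
  by case: (sunj h) => x /=; rewrite jedge_inv.
by rewrite sunjK.
Qed.

Lemma sfun_nofix h : sfun h != h.
Proof.
apply/eqP => e; have : smap (sunj h) = sunj h.
  by rewrite -{2}e /sfun sinjK.
by case: (sunj h) => x /= [] /eqP; rewrite (negbTE (jedge_nofix _)).
Qed.

Definition sperm : {perm TS} := perm (inv_inj sfun_inv).

Lemma spermE h : sperm h = sfun h.
Proof. by rewrite permE. Qed.

Lemma sperm_ok : [forall h, (sperm (sperm h) == h) && (sperm h != h)].
Proof. by apply/forallP => h; rewrite !spermE sfun_inv eqxx sfun_nofix. Qed.

Definition stack : jdiag := JDiag sperm_ok.
End Stack.
Section StackW.
Variables (K : fieldType) (N : nat) (D1 D2 : jdiag).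
Notation HE D := (half_edge (jn D) (jp D) (jq D)).
Notation lab D := {ffun HE D -> 'I_(so_dim N)}.
Notation S := (stack D1 D2).

Definition mrg (p : lab D1 * lab D2) : lab S :=
  [ffun h => match sunj h with inl h1 => p.1 h1 | inr h2 => p.2 h2 end].

Lemma mrgL p h1 : mrg p (sinj (inl h1)) = p.1 h1.
Proof. by rewrite ffunE sinjK. Qed.
Lemma mrgR p h2 : mrg p (sinj (inr h2)) = p.2 h2.
Proof. by rewrite ffunE sinjK. Qed.

Definition spl (l : lab S) : lab D1 * lab D2 :=
  ([ffun h1 => l (sinj (inl h1))], [ffun h2 => l (sinj (inr h2))]).

Lemma mrg_bij : bijective mrg.
Proof.
exists spl.
  by case=> l1 l2; rewrite /spl; congr pair; apply/ffunP => h; rewrite !ffunE sinjK.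
move=> l; apply/ffunP => h; rewrite ffunE -[in RHS](sunjK h).
by case: (sunj h) => x /=; rewrite ffunE.
Qed.

Lemma str1_stack p : str1 K (mrg p) = str1 K p.1 *m str1 K p.2.
Proof.
rewrite /str1 /= bigmx_split; congr (_ *m _); apply: eq_bigr => j _.
  by rewrite -[inr (inl (lshift _ j))]/(sinj (inl (inr (inl j)))) mrgL.
by rewrite -[inr (inl (rshift _ j))]/(sinj (inr (inr (inl j)))) mrgR.
Qed.

Lemma str2_stack p : str2 K (mrg p) = str2 K p.1 *m str2 K p.2.
Proof.
rewrite /str2 /= bigmx_split; congr (_ *m _); apply: eq_bigr => j _.
  by rewrite -[inr (inr (lshift _ j))]/(sinj (inl (inr (inr j)))) mrgL.
by rewrite -[inr (inr (rshift _ j))]/(sinj (inr (inr (inr j)))) mrgR.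
Qed.

Lemma vert_stack p : vertf K (mrg p) = vertf K p.1 * vertf K p.2.
Proof.
rewrite /vertf /= big_split_ord; congr (_ * _); apply: eq_bigr => i _.
  by rewrite -![inl (lshift _ i, _)]/(sinj (inl (inl (i, _)))) !mrgL.
by rewrite -![inl (rshift _ i, _)]/(sinj (inr (inl (i, _)))) !mrgR.
Qed.

Lemma sinj_bij : bijective (@sinj D1 D2).
Proof. exact: (Bijective (@sinjK D1 D2) (@sunjK D1 D2)). Qed.

Lemma npairs_stack : npairs S = (npairs D1 + npairs D2)%N.
Proof.
apply: double_inj; rewrite doubleD !npairs_double.
rewrite -(bij_eq_card sinj_bij) card_sum //.
Qed.

Lemma edge_stack p : edgef K (mrg p) = edgef K p.1 * edgef K p.2.
Proof.
rewrite !edge_normal npairs_stack exprD.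
rewrite (reindex (@sinj D1 D2) (onW_bij _ sinj_bij)).
have E1 h1 : jedge S (sinj (inl h1)) = sinj (inl (jedge D1 h1)).
  by change (sperm D1 D2 (sinj (inl h1)) = sinj (inl (jedge D1 h1))); rewrite spermE /sfun sinjK.
have E2 h2 : jedge S (sinj (inr h2)) = sinj (inr (jedge D2 h2)).
  by change (sperm D1 D2 (sinj (inr h2)) = sinj (inr (jedge D2 h2))); rewrite spermE /sfun sinjK.
have Ej j : (mrg p (sinj j) == mrg p (jedge S (sinj j))) =
   match j with inl h1 => p.1 h1 == p.1 (jedge D1 h1)
              | inr h2 => p.2 h2 == p.2 (jedge D2 h2) end.
  by case: j => h; rewrite ?E1 ?E2 ?mrgL ?mrgR.
under eq_bigr do rewrite Ej.
by rewrite big_sumType /= mulrACA.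
Qed.

Lemma mulmx_sumr' (A : 'M[K]_(N * N)) (I : finType) (F : I -> 'M[K]_(N * N)) :
  A *m (\sum_i F i) = \sum_i A *m F i.
Proof. exact: mulmx_sumr. Qed.

Lemma W_stack : W_St K N S = W_St K N D1 *m W_St K N D2.
Proof.
rewrite !W_StE (reindex mrg (onW_bij _ mrg_bij)) /=.
rewrite mulmx_suml [in RHS](eq_bigr _ (fun i _ => mulmx_sumr' _ _)).
rewrite pair_bigA; apply: eq_bigr => -[l1 l2] _.
rewrite str1_stack str2_stack edge_stack vert_stack /=.
by rewrite -scalemxAl -scalemxAr scalerA tensmx_mul mulrACA.
Qed.
End StackW.

Unset Implicit Arguments.

Theorem corollary5p8 (K : fieldType) (N : nat) :
  [pchar K] =i pred0 -> (2 <= N)%N ->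
  [/\ @in_W_image K N 1%:M,
      (forall x y, @in_W_image K N x -> @in_W_image K N y ->
                   @in_W_image K N (x *m y)) &
      (forall x y, @in_W_image K N x -> @in_W_image K N y ->
                   x *m y = y *m x)].
Proof.
move=> char0 _.
have clos : forall x y, @in_W_image K N x -> @in_W_image K N y ->
                   @in_W_image K N (x *m y).
  move=> x y [s ->] [t ->].
  exists [seq (u.1 * v.1, stack u.2 v.2) | u <- s, v <- t].
  rewrite big_allpairs_dep /= mulmx_suml; apply: eq_bigr => u _.
  rewrite mulmx_sumr; apply: eq_bigr => v _ /=.
  by rewrite W_stack -scalemxAl -scalemxAr scalerA.
split => //.
  by exists [:: (1, D0)]; rewrite big_seq1 /= W_D0 scale1r.
move=> x y hx hy; have hxy := clos x y hx hy.
by rewrite -(image_sym char0 hxy) trmx_mul (image_sym char0 hx) (image_sym char0 hy).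
Qed.
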